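(* Let $n\ge3$ and $H=\sum_{1\le i\ne j\le n}[X_{ij}(R),X_{ji}(R)]\subseteq\mathfrak{stl}_n(R)$. Every $x\in H$ can be written as $$x=\sum_i t(a_i,b_i)+\sum_{2\le j\le n}T_{1j}(c_j,1)$$ for finitely many $a_i,b_i\in R$ and some $c_j\in R$.
   Context: $K$ is a unital commutative ring, $R$ a unital associative $K$-algebra, free as a $K$-module with a basis containing $1$. Leibniz algebra: $K$-bilinear bracket with $[x,[y,z]]=[[x,y],z]-[[x,z],y]$. For $n\ge3$, $\mathfrak{stl}_n(R)$ is the Leibniz algebra over $K$ generated by $X_{ij}(a)$, $a\in R$, $1\le i\ne j\le n$, subject to: $X_{ij}$ is $K$-linear in $a$; $[X_{ij}(a),X_{jk}(b)]=X_{ik}(ab)$ and $[X_{ij}(a),X_{ki}(b)]=-X_{kj}(ba)$ for distinct $i,j,k$; $[X_{ij}(a),X_{kl}(b)]=0$ for $j\ne k$, $i\ne l$. Notation: $T_{ij}(a,b)=[X_{ij}(a),X_{ji}(b)]$, and $t(a,b)=T_{1j}(a,b)-T_{1j}(ba,1)$ for any $2\le j\le n$ (this is independent of $j$). *)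

(* Defs.v *)
From HB Require Import structures.
From mathcomp Require Import all_boot all_order all_algebra.
Set Implicit Arguments. Unset Strict Implicit. Unset Printing Implicit Defensive.
Import GRing.Theory.
Local Open Scope ring_scope.

Definition free_with_basis_containing_1 (K : comPzRingType) (R : algType K) : Prop :=
  exists B : pred R,
    [/\ B 1,
        (forall x : R, exists (s : seq R) (c : R -> K),
            all B s /\ x = \sum_(b <- s) c b *: b)
      & (forall (s : seq R) (c : R -> K),
            all B s -> uniq s -> \sum_(b <- s) c b *: b = 0 ->
            forall b, b \in s -> c b = 0)].

Definition is_leibniz (K : comPzRingType) (L : lmodType K) (br : L -> L -> L) : Prop :=
  [/\ (forall (c : K) (x y z : L), br (c *: x + y) z = c *: br x z + br y z),
      (forall (c : K) (x y z : L), br x (c *: y + z) = c *: br x y + br x z)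
    & (forall x y z : L, br x (br y z) = br (br x y) z - br (br x z) y)].

Definition idx (n i : nat) : bool := (1 <= i <= n)%N.

Definition stl_relations (K : comPzRingType) (R : algType K) (L : lmodType K)
    (br : L -> L -> L) (n : nat) (X : nat -> nat -> R -> L) : Prop :=
  [/\ (forall i j, idx n i -> idx n j -> i != j ->
         forall (c : K) (a b : R), X i j (c *: a + b) = c *: X i j a + X i j b),
      (forall i j k, idx n i -> idx n j -> idx n k ->
         i != j -> j != k -> i != k ->
         forall a b : R, br (X i j a) (X j k b) = X i k (a * b)),
      (forall i j k, idx n i -> idx n j -> idx n k ->
         i != j -> j != k -> i != k ->
         forall a b : R, br (X i j a) (X k i b) = - X k j (b * a))
    & (forall i j k l, idx n i -> idx n j -> idx n k -> idx n l ->
         i != j -> k != l -> j != k -> i != l ->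
         forall a b : R, br (X i j a) (X k l b) = 0)].

Definition Tij (K : comPzRingType) (R : algType K) (L : lmodType K)
    (br : L -> L -> L) (X : nat -> nat -> R -> L) (i j : nat) (a b : R) : L :=
  br (X i j a) (X j i b).

(* t(a,b) = T_12(a,b) - T_12(ba,1)  (taking j = 2) *)
Definition tt (K : comPzRingType) (R : algType K) (L : lmodType K)
    (br : L -> L -> L) (X : nat -> nat -> R -> L) (a b : R) : L :=
  Tij br X 1 2 a b - Tij br X 1 2 (b * a) 1.

(* x lies in H = sum over 1 <= i != j <= n of the K-spans of [X_ij(R), X_ji(R)].
   Since X_ij is K-linear, scalars are absorbed, so the span consists of finite sums. *)
Definition in_H (K : comPzRingType) (R : algType K) (L : lmodType K)
    (br : L -> L -> L) (n : nat) (X : nat -> nat -> R -> L) (x : L) : Prop :=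
  exists s : seq (nat * nat * R * R),
    all (fun q => [&& idx n q.1.1.1, idx n q.1.1.2 & q.1.1.1 != q.1.1.2]) s /\
    x = \sum_(q <- s) Tij br X q.1.1.1 q.1.1.2 q.1.2 q.2.

(* Main.v *)
Require Import Defs.
From HB Require Import structures.
From mathcomp Require Import all_boot all_order all_algebra.
From mathcomp Require Import zify.
Import GRing.Theory.
Local Open Scope ring_scope.

Theorem lemma2p7 (K : comPzRingType) (R : algType K)
    (hR : free_with_basis_containing_1 R)
    (L : lmodType K) (br : L -> L -> L) (hL : is_leibniz br)
    (n : nat) (hn : (3 <= n)%N) (X : nat -> nat -> R -> L)
    (hX : stl_relations br n X) (x : L) (hx : in_H br n X x) :
  exists (s : seq (R * R)) (c : nat -> R),
    x = \sum_(p <- s) tt br X p.1 p.2 + \sum_(2 <= j < n.+1) Tij br X 1 j (c j) 1.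
Proof.
case: hL => brl brr jac.
case: hX => Xlin r2 r3 r4.
have X0 : forall i j, idx n i -> idx n j -> i != j -> X i j 0 = 0.
  move=> i j hi hj hij; have := Xlin i j hi hj hij (-1) 0 0.
  by rewrite !scaleN1r !addNr.
have XD : forall i j, idx n i -> idx n j -> i != j -> forall a b,
    X i j (a + b) = X i j a + X i j b.
  by move=> i j hi hj hij a b; have := Xlin i j hi hj hij 1 a b; rewrite !scale1r.
have XN : forall i j, idx n i -> idx n j -> i != j -> forall a,
    X i j (- a) = - X i j a.
  move=> i j hi hj hij a; have := Xlin i j hi hj hij (-1) a 0.
  by rewrite !scaleN1r X0 // !addr0.
have br0l : forall z, br 0 z = 0.
  by move=> z; have := brl (-1) z z z; rewrite !scaleN1r !addNr.
have brDl : forall x y z, br (x + y) z = br x z + br y z.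
  by move=> x1 y z; have := brl 1 x1 y z; rewrite !scale1r.
have brNl : forall x z, br (- x) z = - br x z.
  by move=> x1 z; have := brl (-1) x1 0 z; rewrite !scaleN1r !addr0 br0l addr0.
have key : forall i j k, idx n i -> idx n j -> idx n k ->
    i != j -> j != k -> i != k -> forall a b c,
    Tij br X i j (a * b) c = Tij br X i k a (b * c) - Tij br X j k (c * a) b.
  move=> i j k hi hj hk hij hjk hik a b c.
  have hkj : k != j by rewrite eq_sym.
  have hki : k != i by rewrite eq_sym.
  have hji : j != i by rewrite eq_sym.
  rewrite /Tij -(r2 i k j) //.
  have -> : forall x1 y z, br (br x1 y) z = br x1 (br y z) + br (br x1 z) y.
    by move=> x1 y z; rewrite jac subrK.
  rewrite (r2 k j i) //.
  by rewrite (r3 i k j) // brNl.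
pose inS (v : L) := exists (s : seq (R * R)) (c : nat -> R),
    v = \sum_(p <- s) tt br X p.1 p.2 + \sum_(2 <= j < n.+1) Tij br X 1 j (c j) 1.
have idxj : forall j, (2 <= j < n.+1)%N -> idx n j && (1%N != j).
  by move=> j; rewrite /idx; lia.
have h1n : idx n 1%N by rewrite /idx; lia.
have h2n : idx n 2%N by rewrite /idx; lia.
have h12 : (1%N != 2%N) by [].
have h21 : (2%N != 1%N) by [].
have sum0 : \sum_(2 <= j < n.+1) Tij br X 1 j 0 1 = 0.
  rewrite big_nat big1 // => j /idxj /andP[hj h1].
  by rewrite /Tij X0 // ?br0l //; rewrite /idx; lia.
have inS0 : inS 0.
  by exists [::], (fun _ => 0); rewrite big_nil add0r sum0.
have inSD : forall u v, inS u -> inS v -> inS (u + v).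
  move=> u v [s [c ->]] [s' [c' ->]].
  exists (s ++ s'), (fun j => c j + c' j); rewrite big_cat /=.
  have -> : \sum_(2 <= j < n.+1) Tij br X 1 j (c j + c' j) 1 =
     \sum_(2 <= j < n.+1) Tij br X 1 j (c j) 1 + \sum_(2 <= j < n.+1) Tij br X 1 j (c' j) 1.
    rewrite -big_split; apply: eq_big_nat => j /idxj /andP[hj h1].
    by rewrite /Tij XD // ?brDl //; rewrite /idx; lia.
  by rewrite addrACA.
have inSN : forall u, inS u -> inS (- u).
  move=> u [s [c ->]].
  exists [seq (- p.1, p.2) | p <- s], (fun j => - c j); rewrite big_map /=.
  rewrite opprD -!sumrN; congr (_ + _).
    apply: eq_bigr => p _; by rewrite /tt /Tij mulrN !XN ?brNl ?opprB ?opprK // addrC.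
  apply: eq_big_nat => j /idxj /andP[hj h1].
  by rewrite /Tij XN // ?brNl //; rewrite /idx; lia.
have inSB : forall u v, inS u -> inS v -> inS (u - v).
  by move=> u v hu hv; apply: inSD => //; apply: inSN.
have inSt : forall a b, inS (tt br X a b).
  by move=> a b; exists [:: (a, b)], (fun _ => 0); rewrite big_seq1 sum0 addr0.
have inST1 : forall j, (2 <= j < n.+1)%N -> forall c, inS (Tij br X 1 j c 1).
  move=> j hj c; exists [::], (fun k => if k == j then c else 0).
  rewrite big_nil add0r (bigD1_seq j) ?iota_uniq ?mem_index_iota //= eqxx.
  rewrite big1_seq ?addr0 // => k /andP[/negbTE -> hk].
  move: hk; rewrite mem_index_iota => /idxj /andP[hk h1].
  by rewrite /Tij X0 // ?br0l //; rewrite /idx; lia.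
have hr : forall j, idx n j -> 1%N != j -> (2 <= j < n.+1)%N.
  by move=> j; rewrite /idx; lia.
have hT1 : forall j, (2 <= j < n.+1)%N -> forall a b, inS (Tij br X 1 j a b).
  move=> j hj a b; have /andP[hjn h1j] := idxj j hj.
  have -> : Tij br X 1 j a b = tt br X a b + Tij br X 1 j (b * a) 1.
    case: (eqVneq j 2%N) => [->|hj2]; first by rewrite /tt subrK.
    have hj2' : j != 2%N by [].
    have e1 := key 1%N j 2%N h1n hjn h2n h1j hj2' h12 a 1 b.
    have e2 := key 1%N j 2%N h1n hjn h2n h1j hj2' h12 (b * a) 1 1.
    rewrite !mulr1 !mul1r in e1 e2.
    by rewrite /tt e1 e2 addrA subrK.
  by apply: inSD; [exact: inSt | exact: inST1].
have hTjk : forall j k, idx n j -> idx n k -> 1%N != j -> 1%N != k -> j != k ->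
    forall a b, inS (Tij br X j k a b).
  move=> j k hj hk h1j h1k hjk a b.
  have e := key 1%N j k h1n hj hk h1j hjk h1k 1 b a.
  rewrite mul1r mulr1 in e.
  have -> : Tij br X j k a b = Tij br X 1 k 1 (b * a) - Tij br X 1 j b a.
    by rewrite e opprB addrC subrK.
  by apply: inSB; apply: hT1; apply: hr.
have hTj1 : forall j, idx n j -> 1%N != j -> forall a b, inS (Tij br X j 1 a b).
  move=> j hj h1j a b.
  pose k := if j == 2%N then 3%N else 2%N.
  have hk : idx n k by rewrite /k; case: ifP; rewrite /idx; lia.
  have h1k : 1%N != k by rewrite /k; case: ifP.
  have hjk : j != k by rewrite /k; case: (eqVneq j 2%N) => [->|].
  have hj1 : j != 1%N by rewrite eq_sym.
  have e := key j 1%N k hj h1n hk hj1 h1k hjk 1 a b.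
  rewrite !mul1r mulr1 in e.
  rewrite e; apply: inSB; first exact: hTjk.
  by apply: hT1; apply: hr.
suff : inS x by [].
case: hx => s [hs ->]; elim: s hs => [|q s IH] /=; first by rewrite big_nil.
move/andP => [hq hs]; rewrite big_cons; apply: inSD; last exact: IH.
case: q hq => [[[i j] a] b] /= /and3P[hi hj hij].
case: (eqVneq i 1%N) => [ei|hi1].
  by rewrite ei; apply: hT1; apply: hr; rewrite -?ei // eq_sym -ei.
case: (eqVneq j 1%N) => [ej|hj1].
  by rewrite ej; apply: hTj1; rewrite // eq_sym.
by apply: hTjk; rewrite // eq_sym.
Qed.
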